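(* If $(E,\mathcal L)$ is an exact local representation over an infinite set $B$, then $|E|\ge 2^{2^{|B|}}$.
   Context: A local representation over a set $B$ is a pair $(E,\mathcal L)$ with $\mathcal L$ an ultrafilter on the cylinder Boolean algebra of $B^E$ (sets $\{\psi\in B^E:(\psi_{e_1},\dots,\psi_{e_n})\in R\}$, $e_i\in E$, $R\subseteq B^n$). Separated: $\{\psi:\psi_{e_1}=\psi_{e_2}\}\in\mathcal L$ only if $e_1=e_2$. For $\eta:I\to E$, the pullback of $\mathcal L$ by $\eta$ is the ultrafilter of cylinders $C\subseteq B^I$ with $\{\psi:(\psi_{\eta(i)})_{i\in I}\in C\}\in\mathcal L$; projection to $B^I$ of an ultrafilter on the cylinders of $B^{I\cup\{i_0\}}$ ($i_0\notin I$) consists of the cylinders of $B^I$ whose preimage under restriction lies in it. $(E,\mathcal L)$ is exact if it is separated and for every finite $I$, $i_0\notin I$, $\eta:I\to E$, and ultrafilter $\mathcal U$ on $\mathcal P(B^{I\cup\{i_0\}})$ projecting to the pullback of $\mathcal L$ by $\eta$, there is $e\in E$ with the pullback of $\mathcal L$ by $\eta\cup\{i_0\mapsto e\}$ equal to $\mathcal U$ (in particular, with $I=\emptyset$: every ultrafilter $\mathcal U$ on $B$ equals $\{S\subseteq B:\{\psi:\psi_e\in S\}\in\mathcal L\}$ for some $e\in E$). *)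

(* Defs.v *)
From Stdlib Require Import List.
Import ListNotations.

Definition finite_type (X : Type) : Prop := exists l : list X, forall x, In x l.

Definition cylinder {B X : Type} (C : (X -> B) -> Prop) : Prop :=
  exists (xs : list X) (R : list B -> Prop),
    forall psi, C psi <-> R (map psi xs).

Record cyl_ultrafilter {B X : Type} (L : ((X -> B) -> Prop) -> Prop) : Prop := {
  cuf_cyl : forall C, L C -> cylinder C;
  cuf_full : L (fun _ => True);
  cuf_nonempty : ~ L (fun _ => False);
  cuf_up : forall C D, L C -> cylinder D -> (forall psi, C psi -> D psi) -> L D;
  cuf_inter : forall C D, L C -> L D -> L (fun psi => C psi /\ D psi);
  cuf_ultra : forall C, cylinder C -> L C \/ L (fun psi => ~ C psi)
}.

Record ultrafilter {Y : Type} (U : (Y -> Prop) -> Prop) : Prop := {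
  uf_full : U (fun _ => True);
  uf_nonempty : ~ U (fun _ => False);
  uf_up : forall C D, U C -> (forall y, C y -> D y) -> U D;
  uf_inter : forall C D, U C -> U D -> U (fun y => C y /\ D y);
  uf_ultra : forall C, U C \/ U (fun y => ~ C y)
}.

Definition local_representation {B E : Type} (L : ((E -> B) -> Prop) -> Prop) : Prop :=
  cyl_ultrafilter L.

Definition separated {B E : Type} (L : ((E -> B) -> Prop) -> Prop) : Prop :=
  forall e1 e2 : E, L (fun psi => psi e1 = psi e2) -> e1 = e2.

Definition pullback {B E I : Type} (L : ((E -> B) -> Prop) -> Prop) (eta : I -> E)
  : ((I -> B) -> Prop) -> Prop :=
  fun C => cylinder C /\ L (fun psi => C (fun i => psi (eta i))).

(* Projection to B^I of an ultrafilter on B^(I ∪ {i0}); I ∪ {i0} is modelled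
   as option I, with None playing the role of the new index i0 ∉ I. *)
Definition projection {B I : Type} (U : ((option I -> B) -> Prop) -> Prop)
  : ((I -> B) -> Prop) -> Prop :=
  fun C => cylinder C /\ U (fun phi => C (fun i => phi (Some i))).

Definition extend {I E : Type} (eta : I -> E) (e : E) : option I -> E :=
  fun o => match o with Some i => eta i | None => e end.

Definition same_filter {Y : Type} (F G : (Y -> Prop) -> Prop) : Prop :=
  forall C, F C <-> G C.

Definition exact {B E : Type} (L : ((E -> B) -> Prop) -> Prop) : Prop :=
  separated L /\
  forall (I : Type), finite_type I ->
  forall (eta : I -> E) (U : ((option I -> B) -> Prop) -> Prop),
    ultrafilter U ->
    same_filter (projection U) (pullback L eta) ->
    exists e : E, same_filter (pullback L (extend eta e)) U.

(* Main.v *)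
Require Import Defs.
From Stdlib Require Import List Classical ClassicalEpsilon FunctionalExtensionality PropExtensionality Cantor Arith.
From mathcomp Require ssreflect ssrbool boolp classical_sets.
Import ListNotations.

Module Z.
Import mathcomp.boot.ssreflect mathcomp.boot.ssrbool mathcomp.classical.boolp mathcomp.classical.classical_sets.
Local Open Scope classical_set_scope.
Lemma myzorn (T:Type) (P : (T -> Prop) -> Prop) :
  (forall F : (T->Prop) -> Prop, (forall X, F X -> P X) ->
     (forall X Y, F X -> F Y -> (forall t, X t -> Y t) \/ (forall t, Y t -> X t)) ->
     P (fun t => exists X, F X /\ X t)) ->
  exists A, P A /\ forall B, (forall t, A t -> B t) -> P B -> forall t, B t -> A t.
Proof.
move=> H.
have HB : forall F : set (set T), F `<=` P -> total_on F subset ->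
      P (\bigcup_(X in F) X).
  move=> F FP Ftot.
  have -> : (\bigcup_(X in F) X) = (fun t => exists X, F X /\ X t).
    apply/funext => t; apply/propext; split.
      by case=> X FX Xt; exists X.
    by case=> X [FX Xt]; exists X.
  apply: H => //.
have [A [PA maxA]] := Zorn_bigcup HB.
exists A; split; first exact PA.
move=> B AB PB t Bt.
apply: contrapT => nAt.
apply: (maxA B) => //; split; first by move=> x; apply: AB.
by move=> BA; apply: nAt; apply: BA.
Qed.
End Z.

Lemma nat_inj (B : Type) : ~ finite_type B -> exists c : nat -> B, forall m n, c m = c n -> m = n.
Proof.
  intros Hinf.
  assert (Hnew : forall l : list B, exists x, ~ In x l).
  { intros l. apply NNPP. intro H. apply Hinf. exists l. intro x.
    apply NNPP. intro Hx. apply H. exists x. exact Hx. }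
  destruct (Hnew []) as [x0 _].
  pose (nxt := fun l : list B => epsilon (inhabits x0) (fun x => ~ In x l)).
  assert (Hnxt : forall l, ~ In (nxt l) l).
  { intro l. unfold nxt. apply (epsilon_spec (inhabits x0) (fun x => ~ In x l)). apply Hnew. }
  pose (ls := fix ls (n : nat) : list B := match n with 0 => [] | S n => nxt (ls n) :: ls n end).
  exists (fun n => nxt (ls n)).
  assert (Hin : forall m k, In (nxt (ls m)) (ls (S m + k))).
  { intros m k. induction k as [|k IH].
    - rewrite Nat.add_0_r. simpl. left. reflexivity.
    - rewrite Nat.add_succ_r. simpl. right. exact IH. }
  intros m n H.
  destruct (Nat.lt_trichotomy m n) as [Hlt|[Heq|Hgt]]; auto.
  - exfalso. destruct (Nat.le_exists_sub (S m) n Hlt) as [k [Hk _]].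
    apply (Hnxt (ls n)). rewrite <- H. rewrite Hk. rewrite Nat.add_comm. apply Hin.
  - exfalso. destruct (Nat.le_exists_sub (S n) m Hgt) as [k [Hk _]].
    apply (Hnxt (ls m)). rewrite H. rewrite Hk. rewrite Nat.add_comm. apply Hin.
Qed.

Lemma compare_preds (B : Type) (P Q : B -> Prop) :
  (exists g : B -> B, (forall x, P x -> Q (g x)) /\ (forall x y, P x -> P y -> g x = g y -> x = y)) \/
  (exists g : B -> B, (forall y, Q y -> P (g y)) /\ (forall x y, Q x -> Q y -> g x = g y -> x = y)).
Proof.
  destruct (classic (inhabited B)) as [inh|ninh].
  2:{ left. exists (fun x => x). split; intros x; exfalso; apply ninh; constructor; exact x. }
  pose (Good := fun S : B * B -> Prop =>
     (forall x y, S (x,y) -> P x /\ Q y) /\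
     (forall x y y', S (x,y) -> S (x,y') -> y = y') /\
     (forall x x' y, S (x,y) -> S (x',y) -> x = x')).
  destruct (Z.myzorn (B*B) Good) as [M [GM maxM]].
  { intros F FG Ftot. split; [|split].
    - intros x y [X [FX HX]]. destruct (FG X FX) as [H1 _]. apply H1. exact HX.
    - intros x y y' [X [FX HX]] [Y [FY HY]].
      destruct (Ftot X Y FX FY) as [XY|YX].
      + destruct (FG Y FY) as [_ [H2 _]]. apply (H2 x); auto.
      + destruct (FG X FX) as [_ [H2 _]]. apply (H2 x); auto.
    - intros x x' y [X [FX HX]] [Y [FY HY]].
      destruct (Ftot X Y FX FY) as [XY|YX].
      + destruct (FG Y FY) as [_ [_ H3]]. apply (H3 x x' y); auto.
      + destruct (FG X FX) as [_ [_ H3]]. apply (H3 x x' y); auto. }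
  destruct GM as [GM1 [GM2 GM3]].
  destruct (classic (forall x, P x -> exists y, M (x,y))) as [Htot|Hntot].
  - left. exists (fun x => epsilon inh (fun y => M (x,y))).
    assert (Hs : forall x, P x -> M (x, epsilon inh (fun y => M (x,y)))).
    { intros x Px. apply (epsilon_spec inh (fun y => M (x,y))). auto. }
    split.
    + intros x Px. apply (GM1 x). apply Hs. exact Px.
    + intros x y Px Py Heq. apply (GM3 x y (epsilon inh (fun y0 => M (x,y0)))).
      apply Hs; auto. rewrite Heq. apply Hs; auto.
  - apply not_all_ex_not in Hntot. destruct Hntot as [x0 Hx0].
    assert (Px0 : P x0) by (apply NNPP; intro; apply Hx0; intro; contradiction).
    assert (Hnx0 : forall y, ~ M (x0,y)) by (intros y Hy; apply Hx0; intros _; exists y; exact Hy).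
    assert (Hsur : forall y, Q y -> exists x, M (x,y)).
    { intros y0 Qy0. apply NNPP. intro Hno.
      assert (HH := maxM (fun q => M q \/ q = (x0,y0))).
      assert (M (x0,y0)).
      { apply HH; auto.
        split; [|split].
        - intros x y [H|H]; auto. inversion H; subst; auto.
        - intros x y y' [H|H] [H'|H'].
          + eauto.
          + inversion H'; subst. exfalso; apply (Hnx0 y H).
          + inversion H; subst. exfalso; apply (Hnx0 y' H').
          + inversion H; inversion H'; subst; auto.
        - intros x x' y [H|H] [H'|H'].
          + eauto.
          + inversion H'; subst. exfalso; apply Hno; exists x; exact H.
          + inversion H; subst. exfalso; apply Hno; exists x'; exact H'.
          + inversion H; inversion H'; subst; auto. }
      apply (Hnx0 y0). auto. }
    right. exists (fun y => epsilon inh (fun x => M (x,y))).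
    assert (Hs : forall y, Q y -> M (epsilon inh (fun x => M (x,y)), y)).
    { intros y Qy. apply (epsilon_spec inh (fun x => M (x,y))). auto. }
    split.
    + intros y Qy. apply (GM1 _ y). apply Hs. exact Qy.
    + intros x y Qx Qy Heq. apply (GM2 (epsilon inh (fun x0 => M (x0,x))) x y).
      apply Hs; auto. rewrite Heq. apply Hs; auto.
Qed.

Definition Dm {B} (S : (B*B)*B -> Prop) (a : B) := exists z, S ((a,a),z).
Definition Good {B} (S : (B*B)*B -> Prop) :=
  (forall p z z', S (p,z) -> S (p,z') -> z = z') /\
  (forall p p' z, S (p,z) -> S (p',z) -> p = p') /\
  (forall a b, Dm S a -> Dm S b -> exists z, S ((a,b),z)) /\
  (forall a b z, S ((a,b),z) -> Dm S a /\ Dm S b /\ Dm S z).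

Lemma Good_ext {B} (S S' : (B*B)*B -> Prop) : (forall q, S q <-> S' q) -> Good S -> Good S'.
Proof.
  intros H G. assert (S = S') by (extensionality q; apply propositional_extensionality; auto).
  subst; auto.
Qed.

Lemma Good_chain {B} (F : ((B*B)*B -> Prop) -> Prop) :
  (forall X, F X -> Good X) ->
  (forall X Y, F X -> F Y -> (forall t, X t -> Y t) \/ (forall t, Y t -> X t)) ->
  Good (fun t => exists X, F X /\ X t).
Proof.
  intros FG Ftot. split; [|split; [|split]].
  - intros p z z' [X [FX HX]] [Y [FY HY]].
    destruct (Ftot X Y FX FY) as [XY|YX].
    + destruct (FG Y FY) as [H1 _]. apply (H1 p); auto.
    + destruct (FG X FX) as [H1 _]. apply (H1 p); auto.
  - intros p p' z [X [FX HX]] [Y [FY HY]].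
    destruct (Ftot X Y FX FY) as [XY|YX].
    + destruct (FG Y FY) as [_ [H2 _]]. apply (H2 p p' z); auto.
    + destruct (FG X FX) as [_ [H2 _]]. apply (H2 p p' z); auto.
  - intros a b [z [X [FX HX]]] [z' [Y [FY HY]]].
    destruct (Ftot X Y FX FY) as [XY|YX].
    + destruct (FG Y FY) as [_ [_ [H3 _]]].
      destruct (H3 a b) as [w Hw]. exists z; auto. exists z'; auto.
      exists w. exists Y; auto.
    + destruct (FG X FX) as [_ [_ [H3 _]]].
      destruct (H3 a b) as [w Hw]. exists z; auto. exists z'; auto.
      exists w. exists X; auto.
  - intros a b z [X [FX HX]].
    destruct (FG X FX) as [_ [_ [_ H4]]].
    destruct (H4 a b z HX) as [[u Hu] [[v Hv] [w Hw]]].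
    split; [|split]; [exists u | exists v | exists w]; exists X; auto.
Qed.

Lemma pairing (B : Type) : ~ finite_type B -> exists p : B * B -> B, forall x y, p x = p y -> x = y.
Proof.
  intros Hinf. destruct (nat_inj B Hinf) as [c Hc].
  pose (R0 := fun q : (B*B)*B => exists i j, q = ((c i, c j), c (to_nat (i,j)))).
  assert (G0 : Good R0).
  { split; [|split; [|split]].
    - intros p z z' [i [j H]] [i' [j' H']].
      inversion H; inversion H'; subst.
      assert (i = i') by (apply Hc; congruence). assert (j = j') by (apply Hc; congruence).
      subst; auto.
    - intros p p' z [i [j H]] [i' [j' H']].
      inversion H; inversion H'; subst.
      assert (Hij : to_nat (i,j) = to_nat (i',j')) by (apply Hc; congruence).
      assert (Hp : of_nat (to_nat (i,j)) = of_nat (to_nat (i',j'))) by (rewrite Hij; auto).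
      rewrite !cancel_of_to in Hp. inversion Hp; subst; auto.
    - intros a b [z [i [j H]]] [z' [i' [j' H']]].
      inversion H; inversion H'; subst.
      exists (c (to_nat (i, i'))). exists i, i'. auto.
    - intros a b z [i [j H]]. inversion H; subst.
      split; [|split].
      + exists (c (to_nat (i,i))). exists i, i. auto.
      + exists (c (to_nat (j,j))). exists j, j. auto.
      + exists (c (to_nat (to_nat (i,j), to_nat (i,j)))). exists (to_nat (i,j)), (to_nat (i,j)). auto. }
  destruct (Z.myzorn ((B*B)*B) (fun S => Good (fun q => S q \/ R0 q))) as [M0 [GM0 maxM0]].
  { intros F FG Ftot.
    apply Good_ext with (fun t => exists Y, (exists X, (F X \/ X = R0) /\ Y = fun q => X q \/ R0 q) /\ Y t).
    - intros q. split.
      + intros [Y [[X [[FX|E] E']] HY]]; subst; auto. destruct HY as [HY|HY]; auto. left. exists X; auto.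
        destruct HY; auto.
      + intros [[X [FX H]]|H]. exists (fun q => X q \/ R0 q). split; auto. exists X; auto.
        exists (fun q => R0 q \/ R0 q). split; auto. exists R0; auto.
    - apply (Good_chain (fun Y => exists X, (F X \/ X = R0) /\ Y = fun q => X q \/ R0 q)).
      + intros Y [X [[FX|E] E']]; subst. apply FG; auto.
        apply Good_ext with R0; auto. intros q; tauto.
      + intros Y1 Y2 [X1 [[FX1|E1] E1']] [X2 [[FX2|E2] E2']]; subst.
        * destruct (Ftot X1 X2 FX1 FX2) as [H|H]; [left|right]; intros t [Ht|Ht]; auto.
        * right. intros t [Ht|Ht]; auto.
        * left. intros t [Ht|Ht]; auto.
        * left; auto. }
  set (N := fun q => M0 q \/ R0 q) in *.
  assert (maxN : forall S', (forall q, N q -> S' q) -> Good S' -> forall q, S' q -> N q).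
  { intros S' HS' GS' q Hq. left. apply (maxM0 S'); auto.
    - intros t Ht. apply HS'. left; auto.
    - apply Good_ext with S'; auto. intros t; split; auto. intros [H|H]; auto. apply HS'; right; auto. }
  clear maxM0.
  destruct GM0 as [NF [NI [NT NC]]].
  set (A := Dm N).
  assert (inh : inhabited B) by exact (inhabits (c 0)).
  set (m := fun a b => epsilon inh (fun z => N ((a,b),z))).
  assert (Hm : forall a b, A a -> A b -> N ((a,b), m a b)).
  { intros a b Ha Hb. unfold m. apply (epsilon_spec inh (fun z => N ((a,b),z))). apply NT; auto. }
  assert (HmA : forall a b, A a -> A b -> A (m a b)).
  { intros a b Ha Hb. destruct (NC a b (m a b) (Hm a b Ha Hb)) as [_ [_ H]]. exact H. }
  assert (Hminj : forall a b a' b', A a -> A b -> A a' -> A b' -> m a b = m a' b' -> a = a' /\ b = b').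
  { intros a b a' b' Ha Hb Ha' Hb' E.
    assert (E2 : (a,b) = (a',b')). { apply (NI _ _ (m a b)). apply Hm; auto. rewrite E. apply Hm; auto. }
    inversion E2; auto. }
  assert (HcA : forall i, A (c i)).
  { intros i. exists (c (to_nat (i,i))). right. exists i, i. auto. }
  assert (HNA : forall a b z, N ((a,b),z) -> A a /\ A b /\ A z) by (intros; apply NC; auto).
  assert (c01 : c 0 <> c 1) by (intro E; apply Hc in E; discriminate).
  destruct (compare_preds B A (fun x => ~ A x)) as [[g [Hg Hginj]] | [g [Hg Hginj]]].
  2:{ (* B injects into A *)
    set (h := fun b => if excluded_middle_informative (A b) then m b (c 0) else m (g b) (c 1)).
    assert (HhA : forall b, A (h b)).
    { intros b. unfold h. destruct (excluded_middle_informative (A b)); apply HmA; auto. }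
    assert (Hhinj : forall x y, h x = h y -> x = y).
    { intros x y E. unfold h in E.
      destruct (excluded_middle_informative (A x)); destruct (excluded_middle_informative (A y)).
      - apply Hminj in E; auto; tauto.
      - apply Hminj in E; auto; tauto.
      - apply Hminj in E; auto. destruct E as [_ E]. symmetry in E; contradiction.
      - apply Hminj in E; auto. destruct E as [E _]. apply Hginj; auto. }
    exists (fun q => m (h (fst q)) (h (snd q))).
    intros [x1 y1] [x2 y2] E. simpl in E. apply Hminj in E; auto. destruct E as [E1 E2].
    apply Hhinj in E1. apply Hhinj in E2. subst; auto. }
  (* extend N *)
  exfalso.
  set (C := fun y => exists x, A x /\ g x = y).
  set (ginv := fun y => epsilon inh (fun x => A x /\ g x = y)).
  assert (Hginv : forall y, C y -> A (ginv y) /\ g (ginv y) = y).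
  { intros y Cy. unfold ginv. apply (epsilon_spec inh (fun x => A x /\ g x = y)). exact Cy. }
  assert (CnA : forall y, C y -> ~ A y).
  { intros y [x [Ax E]]. subst. apply Hg; auto. }
  set (lift := fun a => if excluded_middle_informative (A a) then a else ginv a).
  set (ta := fun a => if excluded_middle_informative (A a) then 0 else 1).
  assert (HliftA : forall a, A a \/ C a -> A (lift a)).
  { intros a Ha. unfold lift. destruct (excluded_middle_informative (A a)); auto.
    destruct Ha; [contradiction|]. apply Hginv; auto. }
  set (code := fun a b => g (m (m (lift a) (lift b)) (m (c (ta a)) (c (ta b))))).
  assert (HcodeA : forall a b, A a \/ C a -> A b \/ C b -> A (m (m (lift a) (lift b)) (m (c (ta a)) (c (ta b))))).
  { intros a b Ha Hb. apply HmA; apply HmA; auto. }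
  assert (HcodeC : forall a b, A a \/ C a -> A b \/ C b -> C (code a b)).
  { intros a b Ha Hb. exists (m (m (lift a) (lift b)) (m (c (ta a)) (c (ta b)))). auto. }
  assert (Hlift_inj : forall a a', A a \/ C a -> A a' \/ C a' -> lift a = lift a' -> ta a = ta a' -> a = a').
  { intros a a' Ha Ha' E1 E2. unfold lift, ta in *.
    destruct (excluded_middle_informative (A a)); destruct (excluded_middle_informative (A a')); try discriminate; auto.
    destruct Ha as [|Ha]; [contradiction|]. destruct Ha' as [|Ha']; [contradiction|].
    destruct (Hginv a Ha) as [_ Ea]. destruct (Hginv a' Ha') as [_ Ea']. congruence. }
  assert (Hcode_inj : forall a b a' b', A a \/ C a -> A b \/ C b -> A a' \/ C a' -> A b' \/ C b' ->
            code a b = code a' b' -> a = a' /\ b = b').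
  { intros a b a' b' Ha Hb Ha' Hb' E. unfold code in E.
    apply Hginj in E; try apply HcodeA; auto.
    apply Hminj in E; try apply HmA; auto; try apply HliftA; auto.
    destruct E as [E1 E2]. apply Hminj in E1; try apply HliftA; auto.
    apply Hminj in E2; auto. destruct E1 as [E1 E1']. destruct E2 as [E2 E2'].
    assert (T1 : ta a = ta a') by (apply Hc; auto). assert (T2 : ta b = ta b') by (apply Hc; auto).
    split; apply Hlift_inj; auto. }
  set (N' := fun q : (B*B)*B => N q \/ (let '((a,b),z) := q in
        (A a \/ C a) /\ (A b \/ C b) /\ ~ (A a /\ A b) /\ z = code a b)).
  assert (DmN' : forall x, Dm N' x <-> A x \/ C x).
  { intros x. split.
    - intros [z [Hz|[Hx _]]]; auto. left. exists z; auto.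
    - intros [Ax|Cx]. destruct Ax as [z Hz]. exists z. left; auto.
      exists (code x x). right. split; auto. split; auto. split; auto. intros [Ax _]. apply (CnA x); auto. }
  assert (GN' : Good N').
  { split; [|split; [|split]].
    - intros [a b] z z' [H|H] [H'|H'].
      + apply (NF (a,b)); auto.
      + exfalso. destruct H' as [_ [_ [H' _]]]. apply H'. apply HNA in H. tauto.
      + exfalso. destruct H as [_ [_ [H _]]]. apply H. apply HNA in H'. tauto.
      + destruct H as [_ [_ [_ H]]]. destruct H' as [_ [_ [_ H']]]. congruence.
    - intros [a b] [a' b'] z [H|H] [H'|H'].
      + apply (NI _ _ z); auto.
      + exfalso. apply HNA in H. destruct H' as [Ha' [Hb' [_ E]]]. subst z.
        apply (CnA (code a' b')). apply HcodeC; auto. tauto.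
      + exfalso. apply HNA in H'. destruct H as [Ha [Hb [_ E]]]. subst z.
        apply (CnA (code a b)). apply HcodeC; auto. tauto.
      + destruct H as [Ha [Hb [_ E]]]. destruct H' as [Ha' [Hb' [_ E']]]. subst z.
        destruct (Hcode_inj a b a' b'); auto. subst; auto.
    - intros a b Ha Hb. apply DmN' in Ha. apply DmN' in Hb.
      destruct (classic (A a /\ A b)) as [[Aa Ab]|nAB].
      + destruct (NT a b Aa Ab) as [z Hz]. exists z. left; auto.
      + exists (code a b). right. auto.
    - intros a b z [H|H].
      + apply HNA in H. rewrite !DmN'. tauto.
      + destruct H as [Ha [Hb [_ E]]]. subst z. rewrite !DmN'. split; auto. }
  assert (Ca0 : C (g (c 0))) by (exists (c 0); auto).
  assert (HN' : N' ((g (c 0), g (c 0)), code (g (c 0)) (g (c 0)))).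
  { right. split; auto. split; auto. split; auto. intros [H _]. apply (CnA _ Ca0); auto. }
  apply (maxN N') in HN'; auto.
  - apply HNA in HN'. apply (CnA _ Ca0). tauto.
  - intros q Hq. left; auto.
Qed.

Lemma list_enc (B : Type) : ~ finite_type B -> exists enc : list B -> B, forall l l', enc l = enc l' -> l = l'.
Proof.
  intros Hinf. destruct (nat_inj B Hinf) as [c Hc]. destruct (pairing B Hinf) as [p Hp].
  pose (g := fix g (l : list B) : B := match l with [] => c 0 | x :: l => p (x, g l) end).
  exists (fun l => p (c (length l), g l)).
  intros l l' E. apply Hp in E. inversion E as [[E1 E2]]. apply Hc in E1.
  clear E. revert l' E1 E2. induction l as [|x l IH]; intros [|x' l'] E1 E2; simpl in *; try discriminate; auto.
  apply Hp in E2. inversion E2; subst. f_equal. apply IH; auto.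
Qed.

Lemma map_inj {X Y} (f : X -> Y) : (forall a b, f a = f b -> a = b) -> forall l l', map f l = map f l' -> l = l'.
Proof.
  intros Hf l. induction l as [|x l IH]; intros [|x' l'] E; simpl in *; try discriminate; auto.
  inversion E. f_equal; auto.
Qed.

Lemma witnesses {X B : Type} (xs : list X) (R : X -> B -> Prop) :
  (forall x, In x xs -> exists b, R x b) -> exists l, forall x, In x xs -> exists b, In b l /\ R x b.
Proof.
  induction xs as [|x xs IH]; intros H.
  - exists []. intros x [].
  - destruct (H x (or_introl eq_refl)) as [b Hb].
    destruct IH as [l Hl]. { intros y Hy. apply H. right; auto. }
    exists (b :: l). intros y [E|Hy].
    + subst. exists b. split; auto. left; auto.
    + destruct (Hl y Hy) as [b' [Hb' Rb']]. exists b'. split; auto. right; auto.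
Qed.

Definition decb (P : Prop) : bool := if excluded_middle_informative P then true else false.

Lemma indep (B : Type) : ~ finite_type B ->
  exists Y : (B -> Prop) -> B -> Prop,
    forall pos neg : list (B -> Prop),
      (forall A A', In A pos -> In A' neg -> A <> A') ->
      exists b, (forall A, In A pos -> Y A b) /\ (forall A, In A neg -> ~ Y A b).
Proof.
  intros Hinf. destruct (list_enc B Hinf) as [enc Henc]. destruct (pairing B Hinf) as [p Hp].
  pose (E2 := fun (l : list B) (phi : list (list B)) => p (enc l, enc (map enc phi))).
  assert (HE2 : forall l phi l' phi', E2 l phi = E2 l' phi' -> l = l' /\ phi = phi').
  { intros l phi l' phi' E. apply Hp in E. inversion E as [[E1 E3]].
    apply Henc in E1. apply Henc in E3. apply map_inj in E3; auto. }
  exists (fun A b => exists l phi, b = E2 l phi /\ exists k, In k phi /\ forall x, In x l -> (A x <-> In x k)).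
  intros pos neg Hdist.
  destruct (witnesses (list_prod pos neg) (fun q x => ~ (fst q x <-> snd q x))) as [l Hl].
  { intros [A A'] Hq. apply in_prod_iff in Hq. destruct Hq as [HA HA'].
    apply NNPP. intro H. apply (Hdist A A' HA HA').
    extensionality x. apply propositional_extensionality.
    apply NNPP. intro H'. apply H. exists x. exact H'. }
  set (phi := map (fun A => filter (fun x => decb (A x)) l) pos).
  exists (E2 l phi). split.
  - intros A HA. exists l, phi. split; auto.
    exists (filter (fun x => decb (A x)) l). split.
    + apply in_map_iff. exists A; auto.
    + intros x Hx. rewrite filter_In. unfold decb.
      destruct (excluded_middle_informative (A x)); split; intros; try tauto; try discriminate.
      destruct H; discriminate.
  - intros A' HA' [l' [phi' [E [k [Hk Hkl]]]]].
    apply HE2 in E. destruct E as [E1 E3]. subst l' phi'.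
    unfold phi in Hk. apply in_map_iff in Hk. destruct Hk as [A [Ek HA]]. subst k.
    destruct (Hl (A, A')) as [x [Hx Hnx]].
    { apply in_prod_iff; auto. }
    simpl in Hnx. apply Hnx. rewrite (Hkl x Hx). rewrite filter_In. unfold decb.
    destruct (excluded_middle_informative (A x)); split; intros; try tauto.
    destruct H; discriminate.
Qed.

Definition FIP {T} (N : (T -> Prop) -> Prop) :=
  forall ls : list (T -> Prop), (forall C, In C ls -> N C) -> exists t, forall C, In C ls -> C t.

Lemma FIP_mono {T} (N N' : (T -> Prop) -> Prop) : FIP N -> (forall C, N' C -> N C) -> FIP N'.
Proof. intros H H' ls Hls. apply H. intros; auto. Qed.

Lemma chain_list {T} (F : ((T -> Prop) -> Prop) -> Prop) (G : (T -> Prop) -> Prop) :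
  (forall X Y, F X -> F Y -> (forall t, X t -> Y t) \/ (forall t, Y t -> X t)) ->
  forall ls, (forall C, In C ls -> (exists X, F X /\ X C) \/ G C) ->
  (forall C, In C ls -> G C) \/ exists X, F X /\ forall C, In C ls -> X C \/ G C.
Proof.
  intros Ftot ls. induction ls as [|C ls IH]; intros H.
  - left. intros C [].
  - destruct IH as [IH|[X [FX HX]]]. { intros; apply H; right; auto. }
    + destruct (H C (or_introl eq_refl)) as [[X [FX HX]]|HG].
      * right. exists X. split; auto. intros D [E|HD]; subst; auto.
      * left. intros D [E|HD]; subst; auto.
    + destruct (H C (or_introl eq_refl)) as [[Y [FY HY]]|HG].
      * right. destruct (Ftot X Y FX FY) as [XY|YX].
        -- exists Y. split; auto. intros D [E|HD]; subst; auto.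
           destruct (HX D HD); auto.
        -- exists X. split; auto. intros D [E|HD]; subst; auto.
      * right. exists X. split; auto. intros D [E|HD]; subst; auto.
Qed.

Lemma ultrafilter_ext {T} (G : (T -> Prop) -> Prop) :
  FIP G -> exists U, ultrafilter U /\ forall C, G C -> U C.
Proof.
  intros HG.
  destruct (Z.myzorn (T -> Prop) (fun M => FIP (fun C => M C \/ G C))) as [M [FM maxM]].
  { intros F FF Ftot ls Hls.
    destruct (chain_list F G Ftot ls) as [H|[X [FX HX]]].
    - intros C HC. destruct (Hls C HC) as [H|H]; auto.
    - apply HG. auto.
    - apply (FF X FX). auto. }
  assert (GM : forall C, G C -> M C).
  { intros C HC. apply (maxM (fun D => M D \/ G D)); auto.
    apply FIP_mono with (fun D => M D \/ G D); auto. intros D [[H|H]|H]; auto. }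
  assert (FM' : FIP M) by (apply FIP_mono with (fun C => M C \/ G C); auto).
  assert (key : forall D, (forall ls, (forall C, In C ls -> M C) -> exists t, (forall C, In C ls -> C t) /\ D t) -> M D).
  { intros D HD. apply (maxM (fun C => M C \/ C = D)); auto.
    intros ls Hls.
    assert (Hred : forall ls, (forall C, In C ls -> (M C \/ C = D) \/ G C) ->
        exists ls', (forall C, In C ls' -> M C) /\ forall t, (forall C, In C ls' -> C t) -> D t -> forall C, In C ls -> C t).
    { clear ls Hls. intros ls. induction ls as [|C ls IH]; intros H.
      - exists []. split. intros C []. intros t _ _ C [].
      - destruct IH as [ls' [H1 H2]]. { intros; apply H; right; auto. }
        destruct (H C (or_introl eq_refl)) as [[HC|HC]|HC].
        + exists (C :: ls'). split.
          * intros C' [E|HC']; subst; auto.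
          * intros t Ht Dt C' [E|HC']; subst. apply Ht; left; auto. apply H2; auto. intros; apply Ht; right; auto.
        + exists ls'. split; auto. intros t Ht Dt C' [E|HC'].
          * rewrite <- E, HC. exact Dt.
          * apply (H2 t Ht Dt C' HC').
        + exists (C :: ls'). split.
          * intros C' [E|HC']; subst; auto.
          * intros t Ht Dt C' [E|HC']; subst. apply Ht; left; auto. apply H2; auto. intros; apply Ht; right; auto. }
    destruct (Hred ls Hls) as [ls' [H1 H2]].
    destruct (HD ls' H1) as [t [Ht Dt]]. exists t. apply H2; auto. }
  exists M. split; auto.
  split.
  - apply key. intros ls Hls. destruct (FM' ls Hls) as [t Ht]. exists t; auto.
  - intros HF. destruct (FM' [fun _ => False]) as [t Ht].
    + intros C [E|[]]; subst; auto.
    + apply (Ht (fun _ => False)). left; auto.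
  - intros C D HC HCD. apply key. intros ls Hls.
    destruct (FM' (C :: ls)) as [t Ht]. { intros C' [E|H]; subst; auto. }
    exists t. split. intros; apply Ht; right; auto. apply HCD. apply Ht; left; auto.
  - intros C D HC HD. apply key. intros ls Hls.
    destruct (FM' (C :: D :: ls)) as [t Ht]. { intros C' [E|[E|H]]; subst; auto. }
    exists t. split. intros; apply Ht; right; right; auto. split; apply Ht; [left|right;left]; auto.
  - intros C. apply NNPP. intros Hn. apply not_or_and in Hn. destruct Hn as [H1 H2].
    assert (W : forall D, ~ M D -> exists ls, (forall C, In C ls -> M C) /\ forall t, (forall C, In C ls -> C t) -> ~ D t).
    { intros D HnD. apply NNPP. intro H. apply HnD. apply key. intros ls Hls.
      apply NNPP. intro H'. apply H. exists ls. split; auto. intros t Ht Dt. apply H'. exists t; auto. }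
    destruct (W C H1) as [l1 [Hl1 Hl1']]. destruct (W _ H2) as [l2 [Hl2 Hl2']].
    destruct (FM' (l1 ++ l2)) as [t Ht].
    { intros C' HC'. apply in_app_or in HC'. destruct HC'; auto. }
    apply (Hl2' t). intros; apply Ht; apply in_or_app; auto.
    apply (Hl1' t). intros; apply Ht; apply in_or_app; auto.
Qed.

Definition eta0 {E : Type} : Empty_set -> E := fun i => match i with end.

Lemma proj_ok {B E : Type} (L : ((E -> B) -> Prop) -> Prop) (U : ((option Empty_set -> B) -> Prop) -> Prop) :
  local_representation L -> ultrafilter U -> same_filter (projection U) (pullback L eta0).
Proof.
  intros HL HU C. destruct HL as [_ Lfull Lne Lup _ _]. destruct HU as [Ufull Une Uup _ _].
  split; intros [Hc H]; split; auto; destruct Hc as [xs [R HR]];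
    (destruct xs as [|x xs]; [|destruct x]); simpl in HR.
  - assert (R []).
    { apply NNPP. intro n. apply Une. apply (Uup _ _ H). intros phi Hphi. apply n. eapply (proj1 (HR _)). exact Hphi. }
    apply (Lup (fun _ => True)); auto.
    + exists [], (fun _ => R []). intros psi. simpl. split; intros; auto. eapply (proj2 (HR _)). auto.
    + intros psi _. eapply (proj2 (HR _)). auto.
  - assert (R []).
    { apply NNPP. intro n. apply Lne. apply (Lup _ _ H).
      - exists [], (fun _ => False). simpl. tauto.
      - intros psi Hpsi. apply n. eapply (proj1 (HR _)). exact Hpsi. }
    apply (Uup (fun _ => True)); auto.
    intros phi _. eapply (proj2 (HR _)). auto.
Qed.

Theorem mainTheorem10 (B E : Type) (L : ((E -> B) -> Prop) -> Prop) :
  local_representation L ->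
  exact L ->
  ~ finite_type B ->
  exists f : ((B -> Prop) -> Prop) -> E,
    forall X Y, f X = f Y -> X = Y.
Proof.
  intros HL [_ Hex] Hinf.
  destruct (indep B Hinf) as [Y HY].
  pose (Zs := fun (A : B -> Prop) (phi : option Empty_set -> B) => Y A (phi None)).
  pose (GX := fun (X : (B -> Prop) -> Prop) (C : (option Empty_set -> B) -> Prop) =>
           (exists A, X A /\ C = Zs A) \/ (exists A, ~ X A /\ C = fun phi => ~ Zs A phi)).
  assert (HFIP : forall X, FIP (GX X)).
  { intros X ls Hls.
    assert (Hpn : exists pos neg, (forall A, In A pos -> X A) /\ (forall A, In A neg -> ~ X A) /\
               forall C, In C ls -> (exists A, In A pos /\ C = Zs A) \/ (exists A, In A neg /\ C = fun phi => ~ Zs A phi)).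
    { clear HY. induction ls as [|C ls IH].
      - exists [], []. split; [|split]; intros ? [].
      - destruct IH as [pos [neg [H1 [H2 H3]]]]. { intros; apply Hls; right; auto. }
        destruct (Hls C (or_introl eq_refl)) as [[A [XA Eq]]|[A [XA Eq]]].
        + exists (A :: pos), neg. split; [|split]; auto.
          * intros A' [E'|HA']; subst; auto.
          * intros C' [E'|HC']; subst.
            -- left. exists A. split; auto. left; auto.
            -- destruct (H3 C' HC') as [[A' [HA' E']]|[A' [HA' E']]]; [left|right]; exists A'; split; auto. right; auto.
        + exists pos, (A :: neg). split; [|split]; auto.
          * intros A' [E'|HA']; subst; auto.
          * intros C' [E'|HC']; subst.
            -- right. exists A. split; auto. left; auto.
            -- destruct (H3 C' HC') as [[A' [HA' E']]|[A' [HA' E']]]; [left|right]; exists A'; split; auto. right; auto. }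
    destruct Hpn as [pos [neg [H1 [H2 H3]]]].
    destruct (HY pos neg) as [b [Hb1 Hb2]].
    { intros A A' HA HA' Eq. subst. apply (H2 A' HA'). auto. }
    exists (fun _ => b). intros C HC.
    destruct (H3 C HC) as [[A [HA Eq]]|[A [HA Eq]]]; subst; simpl.
    - unfold Zs. apply Hb1; auto.
    - unfold Zs. apply Hb2; auto. }
  assert (Hfin : finite_type Empty_set) by (exists []; intros []).
  assert (Hall : forall X, exists e, exists U, ultrafilter U /\ (forall C, GX X C -> U C) /\
              same_filter (pullback L (extend eta0 e)) U).
  { intros X. destruct (ultrafilter_ext (GX X) (HFIP X)) as [U [HU HGU]].
    destruct (Hex Empty_set Hfin eta0 U HU (proj_ok L U HL HU)) as [e He].
    exists e, U. auto. }
  exists (fun X => proj1_sig (constructive_indefinite_description _ (Hall X))).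
  assert (Hcyl : forall A, cylinder (Zs A)).
  { intros A. exists [None], (fun l => match l with b :: _ => Y A b | [] => False end).
    intros phi. simpl. unfold Zs. tauto. }
  assert (Hsep : forall X1 X2 A, proj1_sig (constructive_indefinite_description _ (Hall X1)) =
                             proj1_sig (constructive_indefinite_description _ (Hall X2)) ->
                  X1 A -> X2 A).
  { intros X1 X2 A Ee HX1. apply NNPP. intro HX2.
    destruct (constructive_indefinite_description _ (Hall X1)) as [e1 [U1 [HU1 [HG1 HS1]]]].
    destruct (constructive_indefinite_description _ (Hall X2)) as [e2 [U2 [HU2 [HG2 HS2]]]].
    simpl in Ee. subst e2.
    assert (HU1Z : U1 (Zs A)) by (apply HG1; left; exists A; auto).
    assert (HU2N : U2 (fun phi => ~ Zs A phi)) by (apply HG2; right; exists A; auto).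
    apply HS1 in HU1Z. apply HS2 in HU1Z.
    destruct HU2 as [_ Une Uup Uint _]. apply Une.
    apply (Uup _ _ (Uint _ _ HU1Z HU2N)). intros phi [H1 H2]. auto. }
  intros X1 X2 Ee. extensionality A. apply propositional_extensionality. split.
  - apply Hsep; auto.
  - apply Hsep; auto.
Qed.
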